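(* Let $S^*$ be a size-$k$ node set that is independent of a collection $\mathcal R_2$ of $\theta_2$ independent random RDR sets, and let $\Lambda_2(S^* )=\frac{\hat{INF}_F}{n}\mathcal W_{\mathcal R_2}(S^* )$. For any $\delta\in(0,1)$, with $a=\ln(1/\delta)$, $$\Pr\Big[\sigma(S^* )\ \ge\ \Big(\Big(\sqrt{\Lambda_2(S^* )+\tfrac{25a}{36}}-\sqrt a\Big)^2-\tfrac{a}{36}\Big)\frac{n}{\theta_2(1+\epsilon')}\Big]\ \ge\ 1-\delta .$$
   Context: Setting: $G=(V,E)$ is a directed graph with $n=|V|$ nodes. A misinformation campaign $F$ spreads in $G$ under the paper's competitive propagation model (TCIC); $INF_F$ is the expected number of nodes reached by $F$. $\sigma(\cdot)$ denotes either of the two submodular set functions (lower bound $\underline\mu$ or upper bound $\overline\mu$ of the expected misinformation-mitigation function). $\hat{INF}_F$ is an $(\epsilon',\delta')$-approximation of $INF_F$, and $\Gamma=\hat{INF}_F/INF_F$; throughout, $\hat{INF}_F$ is treated as fixed with $1-\epsilon'\le\Gamma\le1+\epsilon'$, and $\hat{INF}_F\le n$. Each random RDR set (generated by importance sampling) carries a weight; $\mathcal W_{\mathcal R}(S)$ is the total weight of RDR sets in $\mathcal R$ covered by $S$, and $\frac{\hat{INF}_F}{n}\mathcal W_{\mathcal R}(S)=\sum_i\hat Z_i(S)$ where $\hat Z_i(S)$ is the estimator of the $i$-th set, with $\mathbb E[\hat Z_i(S)]=\Gamma\sigma(S)/n$ and, for $p=\mathbb E[\hat Z_i(S)]$, $\lambda>0$: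 $\Pr[\sum_{i\le\theta}\hat Z_i(S)-\theta p\ge\lambda]\le\exp(-\lambda^2/(\tfrac23\lambda+4\theta p\hat{INF}_F/n))$ and $\Pr[\sum_{i\le\theta}\hat Z_i(S)-\theta p\le-\lambda]\le\exp(-\lambda^2/(4\theta p\hat{INF}_F/n))$. *)

(* Defs.v *)
From HB Require Import structures.
From mathcomp Require Import all_boot all_order all_algebra.
From mathcomp Require Import all_classical all_reals all_analysis.
Set Implicit Arguments. Unset Strict Implicit. Unset Printing Implicit Defensive.
Import Order.TTheory GRing.Theory Num.Theory.
Local Open Scope ring_scope.

(* Lambda_2(S^* ) = (hatINF_F / n) W_{R_2}(S^* ) = sum_{i < theta2} hatZ_i(S^* )(omega) *)
Definition Lambda2 {d} {T : measurableType d} {R : realType} (theta2 : nat)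
  (Z : 'I_theta2 -> T -> R) (w : T) : R := \sum_(i < theta2) Z i w.

(* Main.v *)
Require Import Defs.
From HB Require Import structures.
From mathcomp Require Import all_boot all_order all_algebra.
From mathcomp Require Import all_classical all_reals all_analysis.
From mathcomp Require Import ring lra measurable_realfun realfun.
Import Order.TTheory GRing.Theory Num.Theory.
Local Open Scope classical_set_scope.
Local Open Scope ring_scope.

Lemma key (R : realType) (a mu L : R) : 0 < a -> 0 <= mu -> 0 <= L ->
  L - mu < a/3 + 2 * Num.sqrt a * Num.sqrt (mu + a/36) ->
  (Num.sqrt (L + 25 * a / 36) - Num.sqrt a) ^+ 2 - a / 36 <= mu.
Proof.
move=> a0 mu0 L0 h.
have s0 := sqrtr_ge0 a. have t0 := sqrtr_ge0 (mu + a/36). have u0 := sqrtr_ge0 (L + 25 * a/36).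
have ss : Num.sqrt a ^+ 2 = a by rewrite sqr_sqrtr // ltW.
have tt : Num.sqrt (mu + a/36) ^+ 2 = mu + a/36 by rewrite sqr_sqrtr //; lra.
have uu : Num.sqrt (L + 25 * a/36) ^+ 2 = L + 25 * a/36 by rewrite sqr_sqrtr //; lra.
move: h s0 t0 u0 ss tt uu.
set s := Num.sqrt a; set t := Num.sqrt _; set u := Num.sqrt _ => h s0 t0 u0 ss tt uu.
have h1 : u < t + s.
  have : u ^+ 2 < (t + s) ^+ 2 by nra.
  by rewrite ltr_pXn2r // ?nnegrE; lra.
have h2 : 5 * s / 6 <= u.
  have : (5 * s / 6) ^+ 2 <= u ^+ 2 by nra.
  by rewrite ler_pXn2r // ?nnegrE; lra.
have -> : mu = t ^+ 2 - a / 36 by lra.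
rewrite lerD2r; case: (lerP s u) => hsu.
  have : 0 <= t - (u - s) by lra.
  have : 0 <= t + (u - s) by lra.
  move=> p1 p2; have := mulr_ge0 p1 p2; nra.
have : 0 <= s / 6 - (s - u) by lra.
have : 0 <= s / 6 + (s - u) by lra.
move=> p1 p2; have := mulr_ge0 p1 p2; nra.
Qed.

Theorem mainTheorem5
  (R : realType) (d : measure_display) (T : measurableType d)
  (P : probability T R)
  (V : finType) (sigma : {set V} -> R) (Sstar : {set V}) (k : nat)
  (INF hatINF eps' : R) (theta2 : nat) (Z : 'I_theta2 -> T -> R)
  (delta : R) :
  let n : R := #|V|%:R in
  let Gamma := hatINF / INF in
  let p := Gamma * sigma Sstar / n in
  #|Sstar| = k ->
  (forall S, 0 <= sigma S) ->
  0 < INF -> 0 < eps' -> 1 - eps' <= Gamma -> Gamma <= 1 + eps' ->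
  hatINF <= n ->
  (0 < theta2)%N ->
  (* each estimator hatZ_i(S^* ) is a nonnegative random variable *)
  (forall i, measurable_fun setT (Z i)) ->
  (forall i w, 0 <= Z i w) ->
  (* E[hatZ_i(S^* )] = Gamma sigma(S^* ) / n = p *)
  (forall i, ('E_P[Z i])%E = p%:E) ->
  (* the two concentration bounds for the first m estimators *)
  (forall (m : nat) (lambda : R), (m <= theta2)%N -> 0 < lambda ->
     (P [set w | (\sum_(i < theta2 | (i < m)%N) Z i w - m%:R * p >= lambda)%R]
      <= (expR (- lambda ^+ 2 / (2 / 3 * lambda + 4 * m%:R * p * hatINF / n)))%:E)%E) ->
  (forall (m : nat) (lambda : R), (m <= theta2)%N -> 0 < lambda ->
     (P [set w | (\sum_(i < theta2 | (i < m)%N) Z i w - m%:R * p <= - lambda)%R]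
      <= (expR (- lambda ^+ 2 / (4 * m%:R * p * hatINF / n)))%:E)%E) ->
  0 < delta < 1 ->
  let a := ln (1 / delta) in
  (P [set w | (sigma Sstar >=
       ((Num.sqrt (Lambda2 Z w + 25 * a / 36) - Num.sqrt a) ^+ 2 - a / 36)
       * (n / (theta2%:R * (1 + eps'))))%R]
   >= (1 - delta)%:E)%E.
Proof.
move=> n Gamma p _ sig0 INF0 eps0 G1 G2 hn th0 mZ Z0 EZ up lo /andP[d0 d1].
cbv zeta; set a := ln (1 / delta).
have p0 : 0 <= p.
  have := expectation_ge0 P (Z0 (Ordinal th0)).
  by rewrite EZ lee_fin.
have n0 : 0 <= n by rewrite /n ler0n.
have a0 : 0 < a by rewrite /a ln_gt0 // div1r invf_gt1.
have measL : measurable_fun setT (Lambda2 Z).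
  by rewrite /Lambda2; exact: measurable_sum.
set C := n / (theta2%:R * (1 + eps')).
set g := fun w => ((Num.sqrt (Lambda2 Z w + 25 * a / 36) - Num.sqrt a) ^+ 2 - a / 36) * C.
have mg : measurable_fun setT g.
  apply: measurable_realfun.measurable_funM => //.
  apply: measurable_realfun.measurable_funB => //.
  apply: measurable_realfun.measurable_funX.
  apply: measurable_realfun.measurable_funB => //.
  apply: (measurableT_comp (continuous_measurable_fun (@sqrt_continuous R))).
  by apply: measurable_realfun.measurable_funD.
have mgood : measurable [set w | g w <= sigma Sstar].
  have := mg measurableT _ (measurable_itv `]-oo, sigma Sstar]).
  rewrite setTI; congr measurable; apply/seteqP; split=> w /=; by rewrite in_itv.
suff : ((1 - delta)%:E <= P [set w | (g w <= sigma Sstar)%R])%E by [].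
have [n00|npos] : n = 0 \/ 0 < n.
  by move: n0; rewrite le_eqVlt => /orP[/eqP<-|]; auto.
  rewrite (_ : [set w | g w <= _] = setT) ?probability_setT ?lee_fin; first lra.
  apply/seteqP; split=> w //= _; rewrite /g /C n00 mul0r mulr0; exact: sig0.
set mu := theta2%:R * p.
have th0R : 0 < theta2%:R :> R by rewrite ltr0n.
have mu0 : 0 <= mu by apply: mulr_ge0 => //; exact: ltW.
set lam := a / 3 + 2 * Num.sqrt a * Num.sqrt (mu + a / 36).
have s0 := sqrtr_ge0 a. have t0 := sqrtr_ge0 (mu + a/36).
have ss : Num.sqrt a ^+ 2 = a by rewrite sqr_sqrtr // ltW.
have tt : Num.sqrt (mu + a/36) ^+ 2 = mu + a/36 by rewrite sqr_sqrtr //; lra.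
have lam0 : 0 < lam by rewrite /lam; nra.
have lam2 : lam ^+ 2 = a * (2 / 3 * lam + 4 * mu).
  rewrite /lam; move: ss tt; set s := Num.sqrt a; set t := Num.sqrt _ => ss tt.
  have -> : (a / 3 + 2 * s * t) ^+ 2 = a ^+ 2 / 9 + 4 / 3 * a * s * t + 4 * s ^+ 2 * t ^+ 2.
    by rewrite !expr2; field.
  by rewrite ss tt; field.
have q0 : 0 <= p * hatINF / n.
  have -> : p * hatINF / n = hatINF ^+ 2 * (sigma Sstar / INF / n / n).
    rewrite /p /Gamma expr2; field; apply/andP; split; apply/negP => /eqP; lra.
  apply: mulr_ge0; first exact: sqr_ge0.
  by apply: divr_ge0; [apply: divr_ge0; [apply: divr_ge0|]|]; rewrite ?sig0 ?ltW.
have q1 : p * hatINF / n <= p.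
  rewrite -mulrA -[leRHS]mulr1; apply: ler_wpM2l => //.
  by rewrite ler_pdivrMr // mul1r.
have Xle : 4 * theta2%:R * p * hatINF / n <= 4 * mu.
  have -> : 4 * theta2%:R * p * hatINF / n = 4 * theta2%:R * (p * hatINF / n).
    by rewrite !mulrA.
  rewrite /mu; nra.
have Xge : 0 <= 4 * theta2%:R * p * hatINF / n.
  have -> : 4 * theta2%:R * p * hatINF / n = 4 * theta2%:R * (p * hatINF / n).
    by rewrite !mulrA.
  nra.
have hexp : expR (- lam ^+ 2 / (2 / 3 * lam + 4 * theta2%:R * p * hatINF / n)) <= delta.
  have -> : delta = expR (- a).
    by rewrite /a div1r lnV ?posrE // opprK lnK ?posrE.
  rewrite ler_expR mulNr lerN2 ler_pdivlMr; last by nra.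
  rewrite lam2; apply: ler_wpM2l; lra.
have hb := up theta2 lam (leqnn _) lam0.
have eqsum : forall w, \sum_(i < theta2 | (i < theta2)%N) Z i w = Lambda2 Z w.
  by move=> w; rewrite /Lambda2; apply: eq_bigl => i; rewrite ltn_ord.
set bad := [set w | lam <= Lambda2 Z w - mu].
have hbad : (P bad <= delta%:E)%E.
  have -> : bad = [set w | lam <= \sum_(i < theta2 | (i < theta2)%N) Z i w - theta2%:R * p].
    by apply/seteqP; split=> w /=; rewrite eqsum.
  by apply: le_trans hb _; rewrite lee_fin.
have mbad : measurable bad.
  have mf : measurable_fun setT (fun w => Lambda2 Z w - mu).
    by apply: measurable_funB.
  have := mf measurableT _ (measurable_itv `[lam, +oo[).
  rewrite setTI; congr measurable; apply/seteqP; split=> w /=; by rewrite in_itv /= andbT.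
have sub : ~` bad `<=` [set w | (g w <= sigma Sstar)%R].
  move=> w /= /negP; rewrite -ltNge => hw.
  have L0 : 0 <= Lambda2 Z w by apply: sumr_ge0 => i _.
  have hk := @key R a mu (Lambda2 Z w) a0 mu0 L0 hw.
  have C0 : 0 <= C.
    rewrite /C; apply: divr_ge0 => //; apply: mulr_ge0; [exact: ltW | lra].
  have muC : mu * C <= sigma Sstar.
    have -> : mu * C = Gamma * sigma Sstar / (1 + eps').
      rewrite /mu /C /p; field.
      apply/and3P; split; apply/negP => /eqP; rewrite -?/n; lra.
    rewrite ler_pdivrMr; last lra.
    have := sig0 Sstar; nra.
  apply: le_trans muC; rewrite /g; exact: ler_wpM2r.
apply: (le_trans _ (le_measure _ _ _ sub)); rewrite ?inE //; last exact: measurableC.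
have e : P (~` bad) = (1 - P bad)%E := probability_setC P mbad.
apply: (@le_trans _ _ (1 - P bad)%E); last by rewrite le_eqVlt; apply/orP; left; apply/eqP; exact: esym e.
rewrite EFinB; exact: leeB.
Qed.
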